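(* Assume the standing assumptions in the context and in addition $r>0$. Fix $j\in\{1,2\}$ and consider the equation $$\rho v_j(x)=H(x,y_j,Dv_j(x)),\qquad x\ge\underline{x}.$$ The function $\check{\mathsf{u}}_j(x)=\frac{1}{\rho}\frac{(rx+y_j)^{1-\gamma}}{1-\gamma}$ is a viscosity subsolution of this equation on $[\underline{x},+\infty)$, and the function $$\check{\mathsf{v}}_j(x)=\Big(\frac{\rho-r}{\gamma}+r\Big)^{-\gamma}\frac{(x+y_j/r)^{1-\gamma}}{1-\gamma}$$ is a viscosity supersolution of this equation on $(\underline{x},+\infty)$.
   Context: Standing assumptions: $\rho>0$; $-\infty<r<\rho$; $0<y_1<y_2$; $\gamma>1$; $\underline{x}\le0$ with $\rho\underline{x}+y_j>0$ for $j=1,2$. Utility $u(c)=\frac{c^{1-\gamma}}{1-\gamma}$; Hamiltonian $H(x,y_j,p)=\sup_{c\ge0}\{u(c)+(rx+y_j-c)p\}$, equal to $(rx+y_j)p+\frac{\gamma}{1-\gamma}p^{1-1/\gamma}$ for $p\ge0$ and $+\infty$ for $p<0$. A u.s.c. $w$ is a viscosity subsolution on $S\subseteq[\underline{x},\infty)$ if whenever $\varphi$ smooth and $w-\varphi$ has a local max (relative to $[\underline{x},\infty)$) at $x_0\in S$, then $\rho w(x_0)\le H(x_0,y_j,D\varphi(x_0))$; an l.s.c. $w$ is a viscosity supersolution on $S$ if at local minima $x_0\in S$ of $w-\varphi$, $\rho w(x_0)\ge H(x_0,y_j,D\varphi(x_0))$. *)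

(* Defs.v *)
From Stdlib Require Import Reals Lra.
From Coquelicot Require Import Coquelicot.
Open Scope R_scope.

(* x^a for a > 0, with the convention 0^a = 0 (Stdlib's Rpower 0 a = 1). *)
Definition pos_pow (x a : R) : R := if Rlt_dec 0 x then Rpower x a else 0.

(* Hamiltonian H(x,y,p) = sup_{c>=0} { u(c) + (r x + y - c) p }, given in closed
   form by the standing assumptions: +oo for p < 0, and
   (r x + y) p + gamma/(1-gamma) p^(1-1/gamma) for p >= 0. *)
Definition Ham (r gamma x y p : R) : Rbar :=
  if Rlt_dec p 0 then p_infty
  else Finite ((r * x + y) * p + gamma / (1 - gamma) * pos_pow p (1 - 1 / gamma)).

Definition smooth (f : R -> R) : Prop :=
  forall (n : nat) (x : R), ex_derive (Derive_n f n) x.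

Definition usc_on (xl : R) (w : R -> R) : Prop :=
  forall x0, xl <= x0 -> forall eps, 0 < eps ->
    exists d, 0 < d /\ forall x, xl <= x -> Rabs (x - x0) < d -> w x < w x0 + eps.
Definition lsc_on (xl : R) (w : R -> R) : Prop :=
  forall x0, xl <= x0 -> forall eps, 0 < eps ->
    exists d, 0 < d /\ forall x, xl <= x -> Rabs (x - x0) < d -> w x0 - eps < w x.

Definition loc_max_rel (xl : R) (g : R -> R) (x0 : R) : Prop :=
  exists d, 0 < d /\ forall x, xl <= x -> Rabs (x - x0) < d -> g x <= g x0.
Definition loc_min_rel (xl : R) (g : R -> R) (x0 : R) : Prop :=
  exists d, 0 < d /\ forall x, xl <= x -> Rabs (x - x0) < d -> g x0 <= g x.

Definition visc_sub (rho r gamma y xl : R) (S : R -> Prop) (w : R -> R) : Prop :=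
  usc_on xl w /\
  forall (phi : R -> R) (x0 : R), smooth phi -> S x0 ->
    loc_max_rel xl (fun x => w x - phi x) x0 ->
    Rbar_le (Finite (rho * w x0)) (Ham r gamma x0 y (Derive phi x0)).

Definition visc_super (rho r gamma y xl : R) (S : R -> Prop) (w : R -> R) : Prop :=
  lsc_on xl w /\
  forall (phi : R -> R) (x0 : R), smooth phi -> S x0 ->
    loc_min_rel xl (fun x => w x - phi x) x0 ->
    Rbar_le (Ham r gamma x0 y (Derive phi x0)) (Finite (rho * w x0)).

Definition u_check (rho r gamma y : R) (x : R) : R :=
  / rho * (Rpower (r * x + y) (1 - gamma) / (1 - gamma)).

Definition v_check (rho r gamma y : R) (x : R) : R :=
  Rpower ((rho - r) / gamma + r) (- gamma) * (Rpower (x + y / r) (1 - gamma) / (1 - gamma)).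

(* Main.v *)
Require Import Defs.
From Stdlib Require Import Reals Lra.
From Coquelicot Require Import Coquelicot.
Open Scope R_scope.

Lemma Rpower_pos' x a : 0 < Rpower x a.
Proof. unfold Rpower; apply exp_pos. Qed.

Lemma bern t a : 0 < t -> a <= 0 -> 1 + a * (t - 1) <= Rpower t a.
Proof.
  intros Ht Ha. unfold Rpower.
  assert (H1 := exp_ineq1_le (a * ln t)).
  assert (H2 := exp_ineq1_le (ln t)). rewrite exp_ln in H2 by lra.
  nra.
Qed.

Lemma tangent k c a : 0 < k -> 0 < c -> a <= 0 ->
  Rpower c a + a * Rpower c (a - 1) * (k - c) <= Rpower k a.
Proof.
  intros Hk Hc Ha.
  assert (Hb := bern (k / c) a ltac:(apply Rdiv_lt_0_compat; lra) Ha).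
  assert (Ek : Rpower k a = Rpower (k / c) a * Rpower c a).
  { rewrite Rpower_mult_distr by (try apply Rdiv_lt_0_compat; lra). f_equal. field; lra. }
  rewrite Ek.
  replace (a - 1) with (a + Ropp 1) by ring.
  rewrite Rpower_plus, Rpower_Ropp, Rpower_1 by lra.
  assert (Hp := Rpower_pos' c a).
  replace (Rpower c a + a * (Rpower c a * / c) * (k - c)) with
     (Rpower c a * (1 + a * (k / c - 1))) by (field; lra).
  rewrite (Rmult_comm (Rpower (k/c) a)).
  apply Rmult_le_compat_l; lra.
Qed.

Lemma dpow a b e x0 : 0 < a * x0 + b ->
  derivable_pt_lim (fun x => Rpower (a * x + b) e) x0 (e * Rpower (a * x0 + b) (e - 1) * a).
Proof.
  intros H.
  apply (derivable_pt_lim_comp (fun x => a * x + b) (fun u => Rpower u e)).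
  - apply is_derive_Reals. auto_derive; [auto | ring].
  - apply derivable_pt_lim_power; exact H.
Qed.

Lemma cpow a b e x0 : 0 < a * x0 + b ->
  continuity_pt (fun x => Rpower (a * x + b) e) x0.
Proof.
  intros H. apply derivable_continuous_pt. eexists. apply dpow; exact H.
Qed.

Lemma cont_usc xl f : (forall x0, xl <= x0 -> continuity_pt f x0) -> usc_on xl f /\ lsc_on xl f.
Proof.
  intros Hc; split; intros x0 Hx0 eps Heps;
  destruct (Hc x0 Hx0 eps Heps) as [d [Hd Hf]]; exists d; split; auto;
  intros x Hx Hxd;
  destruct (Req_dec x x0) as [->|Hne]; try lra;
  assert (Hh := Hf x (conj (conj I (not_eq_sym Hne)) Hxd));
  simpl in Hh; unfold R_dist in Hh; apply Rabs_def2 in Hh; lra.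
Qed.

Lemma cpow' c d a b e x0 : 0 < a * x0 + b ->
  continuity_pt (fun x => c * (Rpower (a * x + b) e / d)) x0.
Proof.
  intros H.
  change (continuity_pt (mult_fct (fct_cte c) (mult_fct (fun x => Rpower (a * x + b) e) (fct_cte (/ d)))) x0).
  apply continuity_pt_mult; [apply continuity_pt_const; intros ? ?; reflexivity|].
  apply continuity_pt_mult; [apply cpow; exact H|apply continuity_pt_const; intros ? ?; reflexivity].
Qed.

Lemma sub_ineq rho gamma k p : 0 < rho -> 1 < gamma -> 0 < k -> 0 < p ->
  rho * (/ rho * (Rpower k (1 - gamma) / (1 - gamma))) <=
  k * p + gamma / (1 - gamma) * Rpower p (1 - 1 / gamma).
Proof.
  intros Hrho Hg Hk Hp.
  set (c := Rpower p (- 1 / gamma)).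
  assert (Hc : 0 < c) by apply Rpower_pos'.
  assert (T := tangent k c (1 - gamma) Hk Hc ltac:(lra)).
  assert (E1 : Rpower c (1 - gamma) = Rpower p (1 - 1 / gamma)).
  { unfold c; rewrite Rpower_mult; f_equal; field; lra. }
  assert (E2 : Rpower c (1 - gamma - 1) = p).
  { unfold c; rewrite Rpower_mult. replace (-1 / gamma * (1 - gamma - 1)) with 1 by (field; lra).
    apply Rpower_1; lra. }
  assert (E3 : c * p = Rpower p (1 - 1 / gamma)).
  { unfold c. rewrite <- (Rpower_1 p) at 2 by lra. rewrite <- Rpower_plus. f_equal; field; lra. }
  rewrite E1, E2 in T.
  set (Q := Rpower p (1 - 1 / gamma)) in *.
  set (X := Rpower k (1 - gamma)) in *.
  replace (rho * (/ rho * (X / (1 - gamma)))) with (X * / (1 - gamma)) by (field; lra).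
  unfold Rdiv. set (iD := / (1 - gamma)).
  assert (HiD : iD < 0) by (apply Rinv_lt_0_compat; lra).
  assert (HDi : (1 - gamma) * iD = 1) by (unfold iD; field; lra).
  assert (HH : (X - (Q + (1 - gamma) * p * (k - c))) * iD <= 0) by nra.
  assert (Eq1 : (X - (Q + (1 - gamma) * p * (k - c))) * iD =
     X * iD - Q * iD - p * k * ((1 - gamma) * iD) + (c * p) * ((1 - gamma) * iD)) by ring.
  rewrite Eq1, HDi, E3 in HH.
  assert (Eq2 : gamma * iD = iD - (1 - gamma) * iD) by ring.
  rewrite HDi in Eq2. rewrite Eq2. nra.
Qed.

Lemma super_val rho r gamma y x0 : 0 < rho -> r < rho -> 0 < r -> 1 < gamma ->
  0 < x0 + y / r ->
  Rbar_le (Ham r gamma x0 y (Rpower ((rho - r) / gamma + r) (- gamma) *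
     ((1 - gamma) * Rpower (1 * x0 + y / r) (1 - gamma - 1) * 1 * / (1 - gamma))))
   (Finite (rho * v_check rho r gamma y x0)).
Proof.
  intros Hrho Hrr Hr Hg Hz.
  set (B := (rho - r) / gamma + r).
  assert (HB : 0 < B).
  { unfold B. assert (0 < (rho - r) / gamma) by (apply Rdiv_lt_0_compat; lra). lra. }
  set (z := x0 + y / r).
  replace (1 * x0 + y / r) with z by (unfold z; ring).
  replace (1 - gamma - 1) with (- gamma) by ring.
  set (P := Rpower (B * z) (- gamma)).
  assert (EP : Rpower B (- gamma) * Rpower z (- gamma) = P) by (unfold P; apply Rpower_mult_distr; auto).
  replace (Rpower B (- gamma) * ((1 - gamma) * Rpower z (- gamma) * 1 * / (1 - gamma))) with P
    by (rewrite <- EP; field; lra).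
  assert (HP : 0 < P) by apply Rpower_pos'.
  unfold Ham, pos_pow.
  destruct (Rlt_dec P 0); [lra|]. destruct (Rlt_dec 0 P); [|lra].
  simpl.
  assert (E1 : Rpower P (1 - 1 / gamma) = P * (B * z)).
  { unfold P. rewrite Rpower_mult.
    replace (- gamma * (1 - 1 / gamma)) with (- gamma + 1) by (field; lra).
    rewrite Rpower_plus, Rpower_1; [reflexivity|]. apply Rmult_lt_0_compat; [exact HB|exact Hz]. }
  rewrite E1. unfold v_check. fold B. fold z.
  assert (E2 : Rpower z (1 - gamma) = Rpower z (- gamma) * z).
  { replace (1 - gamma) with (- gamma + 1) by ring. rewrite Rpower_plus, Rpower_1; [reflexivity|exact Hz]. }
  rewrite E2.
  assert (Ek : r * x0 + y = r * z) by (unfold z; field; lra).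
  rewrite Ek.
  rewrite <- EP.
  right. unfold B. field. split; lra.
Qed.

Theorem mainTheorem7 (rho r y1 y2 gamma xl : R) (j : nat)
  (Hrho : 0 < rho) (Hrrho : r < rho) (Hr : 0 < r)
  (Hy1 : 0 < y1) (Hy12 : y1 < y2) (Hgamma : 1 < gamma)
  (Hxl : xl <= 0) (Hxl1 : rho * xl + y1 > 0) (Hxl2 : rho * xl + y2 > 0)
  (Hj : j = 1%nat \/ j = 2%nat) :
  let yj := if Nat.eqb j 1 then y1 else y2 in
  visc_sub rho r gamma yj xl (fun x => xl <= x) (u_check rho r gamma yj) /\
  visc_super rho r gamma yj xl (fun x => xl < x) (v_check rho r gamma yj).
Proof.
  intros yj.
  assert (Hyj : rho * xl + yj > 0) by (unfold yj; destruct (Nat.eqb j 1); lra).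
  assert (Hk : forall x, xl <= x -> 0 < r * x + yj) by (intros; nra).
  assert (Hz : forall x, xl <= x -> 0 < 1 * x + yj / r).
  { intros x Hx. specialize (Hk x Hx).
    replace (1 * x + yj / r) with ((r * x + yj) / r) by (field; lra).
    apply Rdiv_lt_0_compat; lra. }
  split; split.
  - apply cont_usc. intros x0 Hx0. unfold u_check. apply cpow'. auto.
  - intros phi x0 Hs Hx0 _.
    unfold Ham, pos_pow.
    destruct (Rlt_dec (Derive phi x0) 0); [exact I|].
    destruct (Rlt_dec 0 (Derive phi x0)).
    + apply sub_ineq; auto.
    + simpl. unfold u_check.
      assert (0 < Rpower (r * x0 + yj) (1 - gamma)) by apply Rpower_pos'.
      assert (Derive phi x0 = 0) as -> by lra.
      replace (rho * (/ rho * (Rpower (r * x0 + yj) (1 - gamma) / (1 - gamma))))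
        with (Rpower (r * x0 + yj) (1 - gamma) / (1 - gamma)) by (field; lra).
      assert (Rpower (r * x0 + yj) (1 - gamma) / (1 - gamma) < 0).
      { apply Rdiv_pos_neg; lra. }
      lra.
  - apply cont_usc. intros x0 Hx0. unfold v_check.
    apply (continuity_pt_ext (fun x => Rpower ((rho - r) / gamma + r) (- gamma) *
      (Rpower (1 * x + yj / r) (1 - gamma) / (1 - gamma)))).
    { intros x. rewrite Rmult_1_l. reflexivity. }
    apply cpow'. auto.
  - intros phi x0 Hs Hx0 [d [Hd Hmin]].
    assert (Hz0 := Hz x0 ltac:(lra)).
    set (l := Rpower ((rho - r) / gamma + r) (- gamma) *
     ((1 - gamma) * Rpower (1 * x0 + yj / r) (1 - gamma - 1) * 1 * / (1 - gamma))).
    assert (Dv : derivable_pt_lim (v_check rho r gamma yj) x0 l).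
    { apply (derivable_pt_lim_ext (fun x => Rpower ((rho - r) / gamma + r) (- gamma) *
      (Rpower (1 * x + yj / r) (1 - gamma) * / (1 - gamma)))).
      { intros x. unfold v_check. rewrite Rmult_1_l. reflexivity. }
      unfold l.
      change (derivable_pt_lim (mult_fct (fct_cte (Rpower ((rho - r) / gamma + r) (- gamma)))
         (mult_fct (fun x => Rpower (1 * x + yj / r) (1 - gamma)) (fct_cte (/ (1 - gamma))))) x0
         (Rpower ((rho - r) / gamma + r) (- gamma) *
          ((1 - gamma) * Rpower (1 * x0 + yj / r) (1 - gamma - 1) * 1 * / (1 - gamma)))).
      replace (Rpower ((rho - r) / gamma + r) (- gamma) *
          ((1 - gamma) * Rpower (1 * x0 + yj / r) (1 - gamma - 1) * 1 * / (1 - gamma)))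
      with (0 * (mult_fct (fun x => Rpower (1 * x + yj / r) (1 - gamma)) (fct_cte (/ (1 - gamma)))) x0
            + fct_cte (Rpower ((rho - r) / gamma + r) (- gamma)) x0 *
             ((1 - gamma) * Rpower (1 * x0 + yj / r) (1 - gamma - 1) * 1 * fct_cte (/ (1 - gamma)) x0
              + Rpower (1 * x0 + yj / r) (1 - gamma) * 0))
        by (unfold fct_cte, mult_fct; ring).
      apply derivable_pt_lim_mult; [apply derivable_pt_lim_const|].
      apply (derivable_pt_lim_mult (fun x => Rpower (1 * x + yj / r) (1 - gamma)) (fct_cte (/ (1 - gamma)))); [exact (dpow 1 (yj / r) (1 - gamma) x0 Hz0)|apply derivable_pt_lim_const]. }
    assert (Hphi : derivable_pt_lim phi x0 (Derive phi x0)).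
    { apply is_derive_Reals. apply Derive_correct. exact (Hs 0%nat x0). }
    assert (Dg : derivable_pt_lim (fun x => v_check rho r gamma yj x - phi x) x0 (l - Derive phi x0)).
    { change (derivable_pt_lim (minus_fct (v_check rho r gamma yj) phi) x0 (l - Derive phi x0)).
      apply derivable_pt_lim_minus; auto. }
    assert (H0 := deriv_minimum _ (Rmax xl (x0 - d)) (x0 + d) x0
                   (exist _ _ Dg)).
    simpl in H0.
    assert (Heq : Derive phi x0 = l).
    { enough (l - Derive phi x0 = 0) by lra. apply H0.
      - apply Rmax_lub_lt; lra.
      - lra.
      - intros x Hx1 Hx2. apply Hmin.
        + apply Rlt_le, (Rle_lt_trans _ (Rmax xl (x0 - d))); [apply Rmax_l|exact Hx1].
        + assert (x0 - d <= Rmax xl (x0 - d)) by apply Rmax_r.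
          apply Rabs_def1; lra. }
    rewrite Heq. unfold l. apply super_val; auto.
    replace (x0 + yj / r) with (1 * x0 + yj / r) by ring. exact Hz0.
Qed.
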